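(* Let $\mathcal{C}$ be a reversible chemical reaction network with species concentrations $x_1,\dots,x_n$, and let $G$ be its modified species--reaction graph (defined in the context). Run the edge-modification procedure described in the context on $G$, with an arbitrary fixed order on the reaction vertices and an arbitrary choice of the unmarked species vertex at each step. Then the procedure terminates, and it returns ''UnconditionallyBinomial'' if and only if $\mathcal{C}$ is unconditionally binomial, i.e. if and only if the steady state ideal $\langle p_1,\dots,p_n\rangle\subseteq\mathbb{Q}[k_{ij},x_1,\dots,x_n]$ (rate constants treated as indeterminates) is generated by binomials.
   Context: A reversible chemical reaction network (RCRN) consists of species $X_1,\dots,X_n$, complexes $C_1,\dots,C_s$ (each complex $C_i$ is a formal nonnegative integer combination $\sum_k y_{ik}X_k$, with monomial $m_i=\prod_k x_k^{y_{ik}}$), and a set of reversible reactions $C_i\rightleftharpoons C_j$ with $C_i\neq C_j$, each having forward rate constant $k_{ij}$ and reverse rate constant $k_{ji}$. Under mass-action kinetics, the binomial associated to the reaction $C_i\rightleftharpoons C_j$ is $b_{ij}=-k_{ij}m_i+k_{ji}m_j$, and the ODEs are $\dot x_k=p_k=\sum_{\text{reactions } C_i\rightleftharpoons C_j} c^{(k)}_{ij}b_{ij}$, where $c^{(k)}_{ij}=y_{ik}-y_{jk}$ is the difference between the stoichiometric coefficients of $X_k$ in the reactant and product complexes. The steady state ideal is $\langle p_1,\dots,p_n\rangle$; the rate constants $k_{ij}$ are treated as independent indeterminates, and the network is called unconditionally binomial if this ideal in $\mathbb{Q}[k_{ij},x_1,\dots,x_n]$ can be generated by binomials (polynomials with at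 most two terms). Modified species--reaction graph $G$: a bipartite graph with one species vertex for each species $X_k$ and one reaction vertex for each reversible reaction $C_i\rightleftharpoons C_j$ (each reversible pair counted once); there is an undirected edge between species vertex $X_k$ and reaction vertex $C_i\rightleftharpoons C_j$ exactly when $c^{(k)}_{ij}\neq 0$, and that edge carries the label $c^{(k)}_{ij}$. (Equivalently, $G$ encodes the binomial coefficient matrix, whose rows are indexed by species, columns by reactions, and entries are $c^{(k)}_{ij}$; edges correspond to nonzero entries.) For an edge $s$–$r$ write $c(s,r)$ for its current label. Procedure (Algorithm 1): Initially all species vertices are unmarked. Process the reaction vertices $r$ one at a time in a fixed order. For the current $r$, let $N(r)$ be the set of species vertices currently adjacent to $r$. If no vertex of $N(r)$ is unmarked, skip $r$. Otherwise choose an unmarked $cs\in N(r)$ and mark it; then for each $s'\in N(r)$ with $s'\neq cs$: set $\mu=-c(s',r)/c(cs,r)$; delete the edge $s'$–$r$; and for every reaction vertex $r'\neq r$ currently adjacent to $cs$: if $s'$ is adjacent to $r'$, replace its label by $c(cs,r')\mu+c(s',r')$ if this number is nonzero and delete the edge $s'$–$r'$ if it is zero; if $s'$ is not adjacent to $r'$, add the edge $s'$–$r'$ with label $c(cs,r')\mu$. After all reaction vertices have been processed, return ''UnconditionallyBinomial'' if every connected component of the final graph consists either of a single species vertex alone, or of exactly one species vertex and one reaction vertex joined by an edge; otherwise return ''NotUnconditionallyBinomial''. *)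

(* Defs.v *)
From HB Require Import structures.
From mathcomp Require Import all_boot all_order all_algebra.
From mathcomp Require Import mpoly.
Set Implicit Arguments. Unset Strict Implicit. Unset Printing Implicit Defensive.
Import Order.TTheory GRing.Theory Num.Theory.
Local Open Scope ring_scope.

(* n species X_0..X_{n-1}; m reversible reactions r : 'I_m, each given by   *)
(* its reactant complex [reac r] and product complex [prod r] (vectors of   *)
(* stoichiometric coefficients y_{ik}).  The complexes of the network are    *)
(* the complexes occurring in the reactions.                                 *)

Definition rcrn_wf (n m : nat) (reac prod : 'I_m -> 'I_n -> nat) : Prop :=
  (forall r, reac r <> prod r) /\
  (forall r r', r <> r' ->
     ~ (reac r = reac r' /\ prod r = prod r') /\
     ~ (reac r = prod r' /\ prod r = reac r')).

Definition coef (n m : nat) (reac prod : 'I_m -> 'I_n -> nat)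
  (k : 'I_n) (r : 'I_m) : int := (reac r k)%:Z - (prod r k)%:Z.

Definition polyR (n m : nat) := {mpoly rat[n + (m + m)]}.

Definition xvar (n m : nat) (k : 'I_n) : polyR n m := 'X_(lshift (m + m) k).
Definition kfw (n m : nat) (r : 'I_m) : polyR n m := 'X_(rshift n (lshift m r)).
Definition krv (n m : nat) (r : 'I_m) : polyR n m := 'X_(rshift n (rshift m r)).

Definition cmono (n m : nat) (y : 'I_n -> nat) : polyR n m :=
  \prod_(k < n) xvar m k ^+ y k.

Definition binom_r (n m : nat) (reac prod : 'I_m -> 'I_n -> nat) (r : 'I_m)
  : polyR n m :=
  - (kfw n r * cmono m (reac r)) + krv n r * cmono m (prod r).

Definition ss_poly (n m : nat) (reac prod : 'I_m -> 'I_n -> nat) (k : 'I_n)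
  : polyR n m :=
  \sum_(r < m) (coef reac prod k r)%:~R * binom_r reac prod r.

Definition in_ideal (R : comRingType) (S : R -> Prop) (p : R) : Prop :=
  exists l : seq (R * R),
    (forall q, q \in l -> S q.2) /\ p = \sum_(q <- l) q.1 * q.2.

Definition is_binomial (N : nat) (p : {mpoly rat[N]}) : Prop :=
  (size (msupp p) <= 2)%N.

Definition unconditionally_binomial (n m : nat)
  (reac prod : 'I_m -> 'I_n -> nat) : Prop :=
  exists S : polyR n m -> Prop,
    (forall q, S q -> is_binomial q) /\
    (forall p, in_ideal S p <->
               in_ideal (fun q => exists k, q = ss_poly reac prod k) p).

(* A graph state is a label matrix L : 'M[rat]_(n,m) with the convention     *)
(* that there is an edge s -- r iff L s r != 0 (and its label is L s r),     *)
(* together with the set of marked species vertices.                         *)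

Definition gstate (n m : nat) := ('M[rat]_(n, m) * {set 'I_n})%type.

Definition init_state (n m : nat) (reac prod : 'I_m -> 'I_n -> nat)
  : gstate n m :=
  (\matrix_(s < n, r < m) (coef reac prod s r)%:~R, set0).

Definition nbr (n m : nat) (L : 'M[rat]_(n, m)) (r : 'I_m) : {set 'I_n} :=
  [set s | L s r != 0].

(* the edge modifications performed when processing r with chosen cs.      *)
(* For every s' in N(r), s' <> cs:  mu = - c(s',r)/c(cs,r); the edge s'--r   *)
(* is deleted; for every r' <> r adjacent to cs, the edge s'--r' gets label *)
(* c(cs,r') mu + c(s',r') if it existed (deleted when this is 0), or is     *)
(* created with label c(cs,r') mu otherwise.  (Distinct s' touch disjoint    *)
(* rows and only read row cs and their own row, so they commute.)            *)
Definition process_with (n m : nat) (L : 'M[rat]_(n, m)) (r : 'I_m)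
  (cs : 'I_n) : 'M[rat]_(n, m) :=
  \matrix_(s' < n, r' < m)
    if (s' \in nbr L r) && (s' != cs) then
      let mu := - L s' r / L cs r in
      if r' == r then 0
      else if L cs r' != 0 then
        (if L s' r' != 0 then L cs r' * mu + L s' r' else L cs r' * mu)
      else L s' r'
    else L s' r'.

Definition alg_step (n m : nat) (r : 'I_m) (st st' : gstate n m) : Prop :=
  let: (L, mk) := st in
  ((nbr L r :\: mk == set0) /\ st' = st) \/
  (exists cs, cs \in nbr L r /\ cs \notin mk /\
              st' = (process_with L r cs, cs |: mk)).

Fixpoint alg_run (n m : nat) (ord : seq 'I_m) (st st' : gstate n m) : Prop :=
  match ord with
  | [::] => st' = st
  | r :: o => exists st1, alg_step r st st1 /\ alg_run o st1 st'
  end.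

Definition gvert (n m : nat) := ('I_n + 'I_m)%type.

Definition gadj (n m : nat) (L : 'M[rat]_(n, m)) : rel (gvert n m) :=
  fun u v => match u, v with
             | inl s, inr r => L s r != 0
             | inr r, inl s => L s r != 0
             | _, _ => false
             end.

Definition gcomp (n m : nat) (L : 'M[rat]_(n, m)) (v : gvert n m)
  : {set gvert n m} := [set w | connect (gadj L) v w].

Definition returns_UB (n m : nat) (L : 'M[rat]_(n, m)) : Prop :=
  forall v : gvert n m,
    (exists s : 'I_n, gcomp L v = [set inl s]) \/
    (exists (s : 'I_n) (r : 'I_m), L s r != 0 /\ gcomp L v = [set inl s; inr r]).

(* Main.v *)
Require Import Defs.
From HB Require Import structures.
From mathcomp Require Import all_boot all_order all_algebra.
From mathcomp Require Import mpoly.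
From Stdlib Require Import FunctionalExtensionality.
Set Implicit Arguments. Unset Strict Implicit. Unset Printing Implicit Defensive.
Import Order.TTheory GRing.Theory Num.Theory.
Local Open Scope ring_scope.

Section Alg.
Variables n m : nat.
Implicit Types L : 'M[rat]_(n, m).

Definition Cond L := forall r : 'I_m, exists a : 'I_n -> rat,
  forall r', \sum_s a s * L s r' = (r == r')%:R.

Definition Span L L' := forall a : 'I_n -> rat, exists b : 'I_n -> rat,
  forall r', \sum_s b s * L' s r' = \sum_s a s * L s r'.

Lemma Span_refl L : Span L L. Proof. by move=> a; exists a. Qed.
Lemma Span_trans L1 L2 L3 : Span L1 L2 -> Span L2 L3 -> Span L1 L3.
Proof.
move=> h1 h2 a; have [b hb] := h1 a; have [c hc] := h2 b.
by exists c => r'; rewrite hc hb.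
Qed.
Lemma Cond_Span L L' : Span L L' -> Cond L -> Cond L'.
Proof.
move=> hs hc r; have [a ha] := hc r; have [b hb] := hs a.
by exists b => r'; rewrite hb ha.
Qed.

Lemma sum_delta (X a : 'I_n -> rat) cs d :
  \sum_s (a s + (s == cs)%:R * d) * X s = \sum_s a s * X s + d * X cs.
Proof.
under eq_bigr do rewrite mulrDl.
rewrite big_split /=; congr (_ + _).
rewrite (bigD1 cs) //= eqxx mul1r big1 ?addr0 // => s /negbTE ->.
by rewrite !mul0r.
Qed.

Lemma rowop_Span L L' (cs : 'I_n) (c : 'I_n -> rat) :
  c cs = 0 -> (forall s r', L' s r' = L s r' + c s * L cs r') ->
  Span L L' /\ Span L' L.
Proof.
move=> hc hL.
have expand x r' : \sum_s x s * L' s r' =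
    \sum_s x s * L s r' + (\sum_s x s * c s) * L cs r'.
  under eq_bigr do rewrite hL mulrDr mulrA.
  by rewrite big_split /= mulr_suml.
split => a.
- exists (fun s => a s + (s == cs)%:R * (- \sum_t a t * c t)) => r'.
  by rewrite expand !sum_delta hc mulr0 addr0 mulNr addrNK.
- exists (fun s => a s + (s == cs)%:R * (\sum_t a t * c t)) => r'.
  by rewrite expand sum_delta.
Qed.

Definition cvec L (r : 'I_m) (cs : 'I_n) (s : 'I_n) : rat :=
  if (s \in nbr L r) && (s != cs) then - L s r / L cs r else 0.

Lemma process_rowop L r cs : L cs r != 0 -> forall s r',
  process_with L r cs s r' = L s r' + cvec L r cs s * L cs r'.
Proof.
move=> hcs s r'; rewrite /cvec mxE /=; case: ifP => h; last by rewrite mul0r addr0.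
case: (r' =P r) => [->|_]; first by rewrite divfK // addrN.
case: (L cs r' =P 0) => [->|_] /=; first by rewrite mulr0 addr0.
case: (L s r' =P 0) => [->|_] /=; last by rewrite addrC mulrC.
by rewrite add0r mulrC.
Qed.

Lemma cvec_cs L r cs : cvec L r cs cs = 0.
Proof. by rewrite /cvec eqxx andbF. Qed.

Lemma step_Span (r : 'I_m) (st st' : gstate n m) : alg_step r st st' -> Span st.1 st'.1 /\ Span st'.1 st.1.
Proof.
case: st => L mk /= [[_ ->]|[cs [hcs [_ ->]]]]; first by split; apply: Span_refl.
rewrite inE in hcs.
exact: (rowop_Span (cvec_cs L r cs) (process_rowop hcs)).
Qed.

Lemma run_Span (ord : seq 'I_m) (st st' : gstate n m) : alg_run ord st st' -> Span st.1 st'.1 /\ Span st'.1 st.1.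
Proof.
elim: ord st => [|r o IH] st /=; first by move=> ->; split; apply: Span_refl.
move=> [st1 [h1 h2]]; have [a1 b1] := step_Span h1; have [a2 b2] := IH _ h2.
by split; [apply: Span_trans a1 a2 | apply: Span_trans b2 b1].
Qed.

Lemma run_exists (ord : seq 'I_m) (st : gstate n m) : exists st', alg_run ord st st'.
Proof.
elim: ord st => [|r o IH] st /=; first by exists st.
case: st => L mk.
case E: (nbr L r :\: mk == set0).
  have [st' h] := IH (L, mk); exists st', (L, mk); split => //; by left.
have [cs hcs] : exists cs, cs \in nbr L r :\: mk.
  by apply/set0Pn; rewrite E.
rewrite inE in hcs; case/andP: hcs => h1 h2.
have [st' h] := IH (process_with L r cs, cs |: mk).
by exists st', (process_with L r cs, cs |: mk); split => //; right; exists cs.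
Qed.

Definition unitcol L (r : 'I_m) (s : 'I_n) := L s r != 0 /\ forall s', s' != s -> L s' r = 0.

Lemma unitcol_sum L r s (a : 'I_n -> rat) : unitcol L r s ->
  \sum_t a t * L t r = a s * L s r.
Proof.
move=> [_ h]; rewrite (bigD1 s) //= big1 ?addr0 // => t ht; by rewrite h // mulr0.
Qed.

Definition Inv (pre : seq 'I_m) (st : gstate n m) :=
  [/\ Cond st.1,
      (forall r, r \in pre -> exists2 s, s \in st.2 & unitcol st.1 r s) &
      (forall s, s \in st.2 -> exists2 r, r \in pre & st.1 s r != 0)].

Lemma step_Inv (pre : seq 'I_m) r (st st' : gstate n m) : r \notin pre -> Inv pre st -> alg_step r st st' ->
  Inv (rcons pre r) st'.
Proof.
case: st => L mk /= hr [hC h2 h3] [[hE ->]|[cs [hcs [hmk ->]]]].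
- exfalso; have [a ha] := hC r; move: (ha r); rewrite eqxx.
  rewrite big1 => [/esym/eqP|s _]; first by rewrite oner_eq0.
  have [->|hsr] := eqVneq (L s r) 0; first by rewrite mulr0.
  have smk : s \in mk.
    by move: hE; rewrite setD_eq0 => /subsetP; apply; rewrite inE.
  have [r1 hr1 hsr1] := h3 s smk.
  have [s1 _ hu] := h2 r1 hr1.
  have ess1 : s = s1 by apply/eqP; apply: contraNT hsr1 => ne; rewrite (proj2 hu s ne) eqxx.
  have := ha r1; rewrite (unitcol_sum _ hu) -ess1.
  have -> : (r == r1) = false by apply/negbTE; apply: contraNneq hr => ->.
  by move/eqP; rewrite mulf_eq0 (negbTE hsr1) orbF => /eqP ->; rewrite mul0r.
- have hcs' : L cs r != 0 by rewrite inE in hcs.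
  have hrow := process_rowop hcs'.
  have [sp _] := rowop_Span (cvec_cs L r cs) hrow.
  have same r1 : L cs r1 = 0 -> forall t, process_with L r cs t r1 = L t r1.
    by move=> h t; rewrite hrow h mulr0 addr0.
  have old r1 : r1 \in pre -> forall t, process_with L r cs t r1 = L t r1.
    move=> hr1; apply: same; have [s1 hs1 [_ hu]] := h2 r1 hr1.
    by apply: hu; apply: contraNneq hmk => ->.
  split => /=.
  + exact: Cond_Span sp hC.
  + move=> r1; rewrite mem_rcons inE => /orP [/eqP ->|hr1].
      exists cs; first by rewrite setU11.
      split; first by rewrite hrow cvec_cs mul0r addr0.
      move=> s' ns'; rewrite hrow /cvec ns' andbT.
      case: ifP => hin; first by rewrite divfK // addrN.
      by rewrite mul0r addr0; move/negbT: hin; rewrite inE negbK => /eqP.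
    have [s1 hs1 [hu1 hu2]] := h2 r1 hr1; exists s1; first by rewrite setU1r.
    by split; [rewrite old | move=> s' ns'; rewrite old // hu2].
  + move=> s; rewrite in_setU1 => /orP [/eqP ->|hs].
      by exists r; [rewrite mem_rcons inE eqxx | rewrite hrow cvec_cs mul0r addr0].
    have [r1 hr1 hsr1] := h3 s hs; exists r1; first by rewrite mem_rcons inE hr1 orbT.
    by rewrite old.
Qed.

Lemma run_Inv (ord pre : seq 'I_m) (st st' : gstate n m) : uniq (pre ++ ord) -> Inv pre st ->
  alg_run ord st st' -> Inv (pre ++ ord) st'.
Proof.
elim: ord pre st => [|r o IH] pre st /=; first by rewrite cats0 => _ h ->.
move=> hu hI [st1 [h1 h2]].
have hr : r \notin pre.
  by move: hu; rewrite cat_uniq /= => /and3P [_ /norP [] //].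
rewrite -cat_rcons; apply: IH h2; first by rewrite cat_rcons.
exact: step_Inv hI h1.
Qed.

Lemma unitcol_uniq L s r r' : Cond L -> unitcol L r s -> unitcol L r' s -> r' = r.
Proof.
move=> hC hu hu'; have [a ha] := hC r.
have h1 := ha r; have h2 := ha r'.
rewrite (unitcol_sum _ hu) eqxx in h1; rewrite (unitcol_sum _ hu') in h2.
apply/eqP; rewrite eq_sym; apply: contraTT isT => ne.
move: h2; rewrite (negbTE ne) => /eqP; rewrite mulf_eq0 (negbTE hu'.1) orbF => /eqP ha0.
by move: h1; rewrite ha0 mul0r => /eqP; rewrite eq_sym oner_eq0.
Qed.

Definition FS L := forall r, exists s, unitcol L r s.

Lemma FS_piv L s r : FS L -> L s r != 0 -> unitcol L r s.
Proof.
move=> hF hs; have [s1 hu] := hF r.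
have -> : s = s1 by apply/eqP; apply: contraNT hs => ne; rewrite (proj2 hu s ne) eqxx.
exact: hu.
Qed.

Lemma FS_row L s r r' : Cond L -> FS L -> L s r != 0 -> L s r' != 0 -> r' = r.
Proof.
move=> hC hF h1 h2; exact: (unitcol_uniq hC (FS_piv hF h1) (FS_piv hF h2)).
Qed.

Lemma comp_eq L v (A : {set gvert n m}) : v \in A ->
  (forall x y, gadj L x y -> (x \in A) = (y \in A)) ->
  (forall w, w \in A -> connect (gadj L) v w) -> gcomp L v = A.
Proof.
move=> hv hcl hw; apply/setP => w; rewrite inE.
apply/idP/idP; last exact: hw.
by move=> hc; rewrite -(closed_connect hcl hc).
Qed.

Lemma pair_comp L s r : L s r != 0 -> (forall r', L s r' != 0 -> r' = r) ->
  (forall s', L s' r != 0 -> s' = s) ->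
  forall v, v \in [set inl s; inr r] -> gcomp L v = [set inl s; inr r].
Proof.
move=> hsr hrow hcol v hv; apply: comp_eq => //.
  have key s' r' : L s' r' != 0 -> (s' == s) = (r' == r).
    move=> h; apply/eqP/eqP => e; subst; [exact: hrow | exact: hcol].
  move=> [s'|r'] [s''|r''] //= h; rewrite !inE /eq_op /= ?orbF ?orFb ?(key _ _ h) //.
have e1 : connect (gadj L) (inl s) (inr r) by apply: connect1.
have e2 : connect (gadj L) (inr r) (inl s) by apply: connect1.
move: hv; rewrite !inE => /orP [] /eqP -> w; rewrite !inE => /orP [] /eqP -> //.
Qed.

Lemma UB_of L : Cond L -> FS L -> returns_UB L.
Proof.
move=> hC hF.
have pc s r : L s r != 0 -> forall v, v \in [set inl s; inr r] ->
    gcomp L v = [set inl s; inr r].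
  move=> h; apply: pair_comp => //.
    by move=> r' h'; exact: (FS_row hC hF h h').
  by move=> s' h'; have [_ hu] := FS_piv hF h; apply/eqP; apply: contraNT h' => ne; rewrite hu ?eqxx.
case=> [s|r].
  case: (pickP (fun r => L s r != 0)) => [r hr|hz].
    by right; exists s, r; split => //; apply: (pc s r hr); rewrite !inE eqxx.
  left; exists s; apply: comp_eq; first by rewrite inE.
    move=> [s'|r'] [s''|r''] //= h; rewrite !inE /eq_op /=.
      by apply/negbTE; apply: contraNneq h => ->; have := hz r''; rewrite /= => /negbFE.
    by apply/esym/negbTE; apply: contraNneq h => ->; have := hz r'; rewrite /= => /negbFE.
  by move=> w; rewrite inE => /eqP ->.
have [s hu] := hF r; right; exists s, r; split; first exact: hu.1.
by apply: pc; [exact: hu.1 | rewrite !inE eqxx orbT].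
Qed.

Lemma Cond_of_UB L : returns_UB L -> Cond L.
Proof.
move=> hU r.
have hin : inr r \in gcomp L (inr r) by rewrite inE.
case: (hU (inr r)) => [[s hs]|[s [r0 [h0 hs]]]].
  by move: hin; rewrite hs inE.
move: (hin); rewrite hs !inE /eq_op /= => /eqP er; subst r0.
have hrow r' : L s r' != 0 -> r' = r.
  move=> h; have : inr r' \in gcomp L (inr r).
    rewrite inE; apply: (connect_trans (y := inl s)); apply: connect1 => //.
  by rewrite hs !inE /eq_op /= => /eqP.
exists (fun t => (t == s)%:R / L s r) => r'.
rewrite (bigD1 s) //= big1 => [|t /negbTE ->]; last by rewrite mul0r mul0r.
rewrite addr0 eqxx mul1r.
have [<-|ne] := eqVneq r r'; first by rewrite eqxx mulVf.
have -> : L s r' = 0 by apply/eqP; apply: contraNT ne => h; rewrite (hrow r' h).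
rewrite mulr0; case: eqP => // /val_inj e; by rewrite e eqxx in ne.
Qed.

End Alg.

Section Ev.
Variables n m : nat.
Local Notation N := (n + (m + m))%N.
Local Notation R := (polyR n m).

Definition xi (k : 'I_n) : 'I_N := lshift (m + m) k.
Definition fi (r : 'I_m) : 'I_N := rshift n (lshift m r).
Definition ri (r : 'I_m) : 'I_N := rshift n (rshift m r).

Definition hv (i : 'I_N) (j : 'I_N) : {poly rat} :=
  if j == i then 'X else if (n <= j)%N then 0 else 1.

Definition Ev (i : 'I_N) (q : R) : {poly rat} := mmap (@polyC rat) (hv i) q.

Lemma EvM i p q : Ev i (p * q) = Ev i p * Ev i q.
Proof. exact: rmorphM. Qed.
Lemma EvD i p q : Ev i (p + q) = Ev i p + Ev i q.
Proof. exact: rmorphD. Qed.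
Lemma EvN i p : Ev i (- p) = - Ev i p.
Proof. exact: rmorphN. Qed.
Lemma Ev_sum i I (s : seq I) (F : I -> R) : Ev i (\sum_(j <- s) F j) = \sum_(j <- s) Ev i (F j).
Proof. exact: rmorph_sum. Qed.
Lemma Ev_int i (z : int) : Ev i z%:~R = z%:~R.
Proof. exact: rmorph_int. Qed.
Lemma Ev_prod i I (s : seq I) (F : I -> R) : Ev i (\prod_(j <- s) F j) = \prod_(j <- s) Ev i (F j).
Proof. exact: rmorph_prod. Qed.
Lemma EvX i j : Ev i 'X_j = hv i j.
Proof. by rewrite /Ev mmapX mmap1U. Qed.
Lemma EvXn i p k : Ev i (p ^+ k) = Ev i p ^+ k.
Proof. exact: rmorphXn. Qed.


Definition goodm (i : 'I_N) (mm : 'X_{1..N}) : bool :=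
  [forall j : 'I_N, ((n <= j)%N && (j != i)) ==> (mm j == 0%N)].

Lemma mmap1_hv (i : 'I_N) (mm : 'X_{1..N}) : (n <= i)%N ->
  mmap1 (hv i) mm = if goodm i mm then 'X^(mm i) else 0.
Proof.
move=> hi; rewrite /mmap1 (bigD1 i) //= {1}/hv eqxx.
case: ifP => hg.
  rewrite big1 ?mulr1 // => j hj; rewrite /hv (negbTE hj).
  case: ifP => hn; last by rewrite expr1n.
  by move/forallP: hg => /(_ j); rewrite hn hj /= => /eqP ->; rewrite expr0.
move/negbT: hg; rewrite negb_forall => /existsP [j]; rewrite negb_imply => /andP [/andP [hn hj] hm].
rewrite (bigD1 j) //= /hv (negbTE hj) hn expr0n (negbTE hm) mul0r mulr0 //.
Qed.

Definition Zf (q : R) : rat :=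
  \sum_(mm <- msupp q) q@_mm * [forall j : 'I_N, (n <= j)%N ==> (mm j == 0%N)]%:R.

Lemma Ev_expl (i : 'I_N) q : Ev i q = \sum_(mm <- msupp q) (q@_mm)%:P * mmap1 (hv i) mm.
Proof. by []. Qed.

Lemma Ev_coef0 (i : 'I_N) q : (n <= i)%N -> (Ev i q)`_0 = Zf q.
Proof.
move=> hi; rewrite Ev_expl coef_sum /Zf; apply: eq_bigr => mm _.
rewrite coefCM mmap1_hv //; congr (_ * _).
case: ifP => hg; last first.
  rewrite coef0; apply/esym; apply/eqP; rewrite pnatr_eq0 eqb0; move/negbT: hg; apply: contra.
  move=> /forallP hall; apply/forallP => j; apply/implyP => /andP [hn _].
  exact: (implyP (hall j) hn).
rewrite coefXn; have -> // : (0%N == mm i) = [forall j : 'I_N, (n <= j)%N ==> (mm j == 0%N)].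
apply/idP/forallP => [/eqP h0 j|hall].
  apply/implyP => hn; case: (j =P i) => [->|/eqP ne]; first by rewrite -h0.
  by move/forallP: hg => /(_ j); rewrite hn ne.
by rewrite eq_sym (implyP (hall i) hi).
Qed.

Lemma Ev_coef1_nz (i : 'I_N) q : (n <= i)%N -> (Ev i q)`_1 != 0 ->
  exists2 mm, mm \in msupp q & (mm i == 1%N) && goodm i mm.
Proof.
move=> hi hnz.
case: (boolP (has (fun mm : 'X_{1..N} => (mm i == 1%N) && goodm i mm) (msupp q))) => [/hasP [mm h1 h2]|/hasPn hno]; first by exists mm.
exfalso; move/negP: hnz; apply; apply/eqP.
rewrite Ev_expl coef_sum big1_seq //= => mm hmm; rewrite coefCM mmap1_hv //.
case: ifP => hg; last by rewrite coef0 mulr0.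
rewrite coefXn; case: eqP => [e|]; last by rewrite mulr0.
by move: (hno mm hmm); rewrite -e eqxx hg.
Qed.

Lemma coef1_mul (p q : {poly rat}) : q`_0 = 0 -> (p * q)`_1 = p`_0 * q`_1.
Proof.
move=> h; rewrite coefM big_ord_recr big_ord_recr big_ord0 /= h mulr0 addr0 add0r.
by [].
Qed.

End Ev.

Section Ideal.
Variable T : comNzRingType.
Implicit Types S : T -> Prop.

Lemma in_ideal0 S : in_ideal S 0.
Proof. by exists [::]; rewrite big_nil. Qed.

Lemma in_idealD S p q : in_ideal S p -> in_ideal S q -> in_ideal S (p + q).
Proof.
move=> [l1 [h1 ->]] [l2 [h2 ->]]; exists (l1 ++ l2); rewrite big_cat; split => //.
by move=> x; rewrite mem_cat => /orP [/h1|/h2].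
Qed.

Lemma in_idealM S c p : in_ideal S p -> in_ideal S (c * p).
Proof.
move=> [l [h ->]]; exists [seq (c * x.1, x.2) | x <- l]; split.
  by move=> x /mapP [y hy ->] /=; apply: h.
by rewrite big_map mulr_sumr; apply: eq_bigr => x _; rewrite mulrA.
Qed.

Lemma in_ideal_mem S q : S q -> in_ideal S q.
Proof.
move=> h; exists [:: (1, q)]; split; first by move=> x; rewrite inE => /eqP ->.
by rewrite big_seq1 mul1r.
Qed.

Lemma in_ideal_sum S I (s : seq I) (F : I -> T) :
  (forall i, in_ideal S (F i)) -> in_ideal S (\sum_(i <- s) F i).
Proof.
move=> h; elim: s => [|x s IH]; first by rewrite big_nil; apply: in_ideal0.
by rewrite big_cons; apply: in_idealD.
Qed.

Lemma in_ideal_trans S S' p : (forall q, S q -> in_ideal S' q) ->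
  in_ideal S p -> in_ideal S' p.
Proof.
move=> h [l [hl ->]]; rewrite big_seq; elim/big_rec: _ => [|x y hx hy].
  exact: in_ideal0.
by apply: in_idealD => //; apply: in_idealM; apply: h; apply: hl.
Qed.

End Ideal.

Section Net.
Variables (n m : nat) (reac prod : 'I_m -> 'I_n -> nat).
Local Notation N := (n + (m + m))%N.
Local Notation R := (polyR n m).

Lemma val_xi (k : 'I_n) : val (xi m k) = k. Proof. by []. Qed.
Lemma val_fi (r : 'I_m) : val (fi n r) = (n + r)%N. Proof. by []. Qed.
Lemma val_ri (r : 'I_m) : val (ri n r) = (n + (m + r))%N. Proof. by []. Qed.

Lemma hv_x (i : 'I_N) k : (n <= i)%N -> hv i (xi m k) = 1.
Proof.
move=> hi; rewrite /hv; have hk : ~~ (n <= xi m k)%N by rewrite val_xi -ltnNge.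
case: eqP => [e|_]; last by rewrite (negbTE hk).
by move: hk; rewrite e hi.
Qed.

Lemma Ev_cmono (i : 'I_N) y : (n <= i)%N -> Ev i (cmono m y) = 1.
Proof.
move=> hi; rewrite /cmono /Ev rmorph_prod big1 // => k _.
by rewrite rmorphXn /= -/(Ev i _) /xvar EvX hv_x // expr1n.
Qed.

Lemma Ev_binom_ri r0 r : Ev (ri n r0) (binom_r reac prod r) = if r == r0 then 'X else 0.
Proof.
have hi : (n <= ri n r0)%N by rewrite val_ri leq_addr.
rewrite /binom_r EvD EvN !EvM !Ev_cmono // !mulr1 /kfw /krv !EvX /hv.
have -> : (fi n r == ri n r0) = false.
  apply/negbTE; rewrite -val_eqE val_fi val_ri eqn_add2l neq_ltn.
  by rewrite (leq_trans (ltn_ord r)) ?leq_addr.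
rewrite val_fi leq_addr oppr0 add0r.
have -> : (ri n r == ri n r0) = (r == r0).
  by rewrite -val_eqE val_ri /= !eqn_add2l.
by rewrite -/(ri n r) val_ri leq_addr; case: eqP.
Qed.

Lemma Ev_binom_fi r0 r : Ev (fi n r0) (binom_r reac prod r) = if r == r0 then - 'X else 0.
Proof.
have hi : (n <= fi n r0)%N by rewrite val_fi leq_addr.
rewrite /binom_r EvD EvN !EvM !Ev_cmono // !mulr1 /kfw /krv !EvX /hv.
have -> : (ri n r == fi n r0) = false.
  apply/negbTE; rewrite -val_eqE val_fi val_ri eqn_add2l neq_ltn.
  by rewrite (leq_trans (ltn_ord r0)) ?leq_addr ?orbT.
rewrite val_ri leq_addr addr0.
have -> : (fi n r == fi n r0) = (r == r0).
  by rewrite -val_eqE val_fi /= !eqn_add2l.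
by rewrite -/(fi n r) val_fi leq_addr; case: eqP => _; rewrite ?oppr0.
Qed.

Definition Cc (k : 'I_n) (r : 'I_m) : rat := (coef reac prod k r)%:~R.

Lemma Ev_ss_ri r0 k : Ev (ri n r0) (ss_poly reac prod k) = (Cc k r0)%:P * 'X.
Proof.
rewrite /ss_poly {1}/Ev rmorph_sum /= (bigD1 r0) //= big1 ?addr0 => [|r hr].
  by rewrite -/(Ev _ _) EvM Ev_int Ev_binom_ri eqxx /Cc (rmorph_int (@polyC rat)).
by rewrite -/(Ev _ _) EvM Ev_binom_ri (negbTE hr) mulr0.
Qed.

Lemma Ev_ss_fi r0 k : Ev (fi n r0) (ss_poly reac prod k) = - ((Cc k r0)%:P * 'X).
Proof.
rewrite /ss_poly {1}/Ev rmorph_sum /= (bigD1 r0) //= big1 ?addr0 => [|r hr].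
  by rewrite -/(Ev _ _) EvM Ev_int Ev_binom_fi eqxx /Cc (rmorph_int (@polyC rat)) mulrN.
by rewrite -/(Ev _ _) EvM Ev_binom_fi (negbTE hr) mulr0.
Qed.

Lemma ss_ri0 r0 k : (Ev (ri n r0) (ss_poly reac prod k))`_0 = 0.
Proof. by rewrite Ev_ss_ri coefMX. Qed.
Lemma ss_ri1 r0 k : (Ev (ri n r0) (ss_poly reac prod k))`_1 = Cc k r0.
Proof. by rewrite Ev_ss_ri coefMX /= coefC. Qed.
Lemma ss_fi0 r0 k : (Ev (fi n r0) (ss_poly reac prod k))`_0 = 0.
Proof. by rewrite Ev_ss_fi coefN coefMX oppr0. Qed.
Lemma ss_fi1 r0 k : (Ev (fi n r0) (ss_poly reac prod k))`_1 = - Cc k r0.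
Proof. by rewrite Ev_ss_fi coefN coefMX /= coefC. Qed.

Lemma G_comb (i : 'I_N) (a : 'I_n -> R) : (n <= i)%N ->
  (forall k, (Ev i (ss_poly reac prod k))`_0 = 0) ->
  let q := \sum_k a k * ss_poly reac prod k in
  (Ev i q)`_0 = 0 /\ (Ev i q)`_1 = \sum_k Zf (a k) * (Ev i (ss_poly reac prod k))`_1.
Proof.
move=> hi h0 q; rewrite /q {1}/Ev rmorph_sum /= -/(Ev _ _) coef_sum.
rewrite /Ev rmorph_sum /= coef_sum; split.
  by apply: big1 => k _; rewrite rmorphM coef0M -/(Ev _ _) h0 mulr0.
apply: eq_bigr => k _; rewrite rmorphM /= coef1_mul -!/(Ev _ _) ?h0 //.
by rewrite Ev_coef0.
Qed.

Definition Pset (q : R) := exists k, q = ss_poly reac prod k.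

Lemma ideal_repr q : in_ideal Pset q ->
  exists a : 'I_n -> R, q = \sum_k a k * ss_poly reac prod k.
Proof.
move=> [l [hl ->]]; elim: l hl => [|[c p] l IH] hl.
  by exists (fun _ => 0); rewrite big_nil big1 // => k _; rewrite mul0r.
rewrite big_cons /=.
have [a ->] := IH (fun x hx => hl x (mem_behead (s := (c, p) :: l) hx)).
have [k0 /= ->] := hl (c, p) (mem_head _ _).
exists (fun k => a k + (k == k0)%:R * c).
under [RHS]eq_bigr do rewrite mulrDl.
rewrite big_split /= addrC; congr (_ + _).
rewrite (bigD1 k0) //= eqxx mul1r big1 ?addr0 // => k /negbTE ->.
by rewrite !mul0r.
Qed.

Lemma three_nz (q : R) (i1 i2 i3 : 'I_N) : (n <= i1)%N -> (n <= i2)%N -> (n <= i3)%N ->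
  i1 != i2 -> i1 != i3 -> i2 != i3 ->
  (Ev i1 q)`_1 != 0 -> (Ev i2 q)`_1 != 0 -> (Ev i3 q)`_1 != 0 ->
  (2 < size (msupp q))%N.
Proof.
move=> h1 h2 h3 d12 d13 d23 g1 g2 g3.
have [m1 hm1 /andP [e1 q1]] := Ev_coef1_nz h1 g1.
have [m2 hm2 /andP [e2 q2]] := Ev_coef1_nz h2 g2.
have [m3 hm3 /andP [e3 q3]] := Ev_coef1_nz h3 g3.
have dist (a b : 'X_{1..N}) (ia ib : 'I_N) : (n <= ia)%N -> ia != ib -> (a ia == 1%N) ->
    goodm ib b -> a != b.
  move=> ha dab ea gb; apply/eqP => eab; subst b.
  move/forallP: gb => /(_ ia); rewrite ha dab /= => /eqP.
  by move/eqP: ea => ->.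
have u : uniq [:: m1; m2; m3].
  rewrite /= !inE negb_or (dist _ _ _ _ h1 d12 e1 q2) (dist _ _ _ _ h1 d13 e1 q3).
  by rewrite (dist _ _ _ _ h2 d23 e2 q3).
have := uniq_leq_size u; apply => x; rewrite !inE => /or3P [] /eqP -> //.
Qed.

Lemma ri_fi_facts (r r' : 'I_m) :
  [/\ (n <= ri n r)%N, (n <= fi n r)%N, ri n r != fi n r &
      (r != r' -> ri n r != ri n r' /\ fi n r != ri n r')].
Proof.
split; rewrite ?val_ri ?val_fi ?leq_addr //.
  rewrite -val_eqE val_ri val_fi eqn_add2l neq_ltn.
  by rewrite (leq_trans (ltn_ord r)) ?leq_addr ?orbT.
move=> d; split; first by rewrite -val_eqE val_ri val_ri /= !eqn_add2l.
rewrite -val_eqE val_ri val_fi eqn_add2l neq_ltn.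
by rewrite (leq_trans (ltn_ord r)) ?leq_addr.
Qed.

Lemma binom_w (q : R) (a : 'I_n -> R) : q = \sum_k a k * ss_poly reac prod k ->
  (size (msupp q) <= 2)%N -> forall r r', r != r' ->
  \sum_k Zf (a k) * Cc k r != 0 -> \sum_k Zf (a k) * Cc k r' = 0.
Proof.
move=> hq hs r r' d hw; apply/eqP; apply: contraTT hs => hw'.
rewrite -ltnNge.
have [a1 a2 a3 a4] := ri_fi_facts r r'.
have [b1 b2 b3 b4] := ri_fi_facts r' r.
have [d1 d2] := a4 d.
have g1 : (Ev (ri n r) q)`_1 != 0.
  by rewrite hq (proj2 (G_comb a a1 (@ss_ri0 r))); under eq_bigr do rewrite ss_ri1.
have g2 : (Ev (fi n r) q)`_1 != 0.
  rewrite hq (proj2 (G_comb a a2 (@ss_fi0 r))); under eq_bigr do rewrite ss_fi1 mulrN.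
  by rewrite sumrN oppr_eq0.
have g3 : (Ev (ri n r') q)`_1 != 0.
  by rewrite hq (proj2 (G_comb a b1 (@ss_ri0 r'))); under eq_bigr do rewrite ss_ri1.
exact: (three_nz a1 a2 b1 a3 d1 d2 g1 g2 g3).
Qed.

Lemma UB_Cond : rcrn_wf reac prod -> unconditionally_binomial reac prod ->
  forall r, exists a : 'I_n -> rat, forall r', \sum_k a k * Cc k r' = (r == r')%:R.
Proof.
move=> [hne _] [S [hSb hS]] r.
have [k0 hk0] : exists k0, Cc k0 r != 0.
  case: (pickP (fun k => reac r k != prod r k)) => [k hk|hz].
    by exists k; rewrite /Cc /coef intr_eq0 subr_eq0 eqz_nat.
  exfalso; apply: (hne r); apply: functional_extensionality => k.
  by apply/eqP; move: (hz k) => /= /negbFE.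
have hp : in_ideal S (ss_poly reac prod k0).
  by apply/hS; apply: in_ideal_mem; exists k0.
case: hp => l [hl hsum].
have hq x : x \in l -> exists a : 'I_n -> R, x.2 = \sum_k a k * ss_poly reac prod k.
  by move=> hx; apply: ideal_repr; apply/hS; apply: in_ideal_mem; apply: hl.
have [h1 _ _ _] := ri_fi_facts r r.
have hq0 x : x \in l -> (Ev (ri n r) x.2)`_0 = 0.
  by move=> hx; have [a ->] := hq x hx; exact: (proj1 (G_comb a h1 (@ss_ri0 r))).
have [x hx hxnz] : exists2 x, x \in l & (Ev (ri n r) x.2)`_1 != 0.
  case: (boolP (has (fun x => (Ev (ri n r) x.2)`_1 != 0) l)) => [/hasP [x hx h]|/hasPn hno].
    by exists x.
  exfalso; move: hk0; rewrite -ss_ri1 hsum {1}/Ev rmorph_sum /= coef_sum.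
  rewrite big1_seq ?eqxx // => y /= hy; rewrite rmorphM -!/(Ev _ _) coef1_mul ?hq0 //.
  by move: (hno y hy); rewrite negbK => /eqP ->; rewrite mulr0.
have [a ha] := hq x hx.
set w := fun r' => \sum_k Zf (a k) * Cc k r'.
have hw : w r != 0.
  by move: hxnz; rewrite ha (proj2 (G_comb a h1 (@ss_ri0 r))); under eq_bigr do rewrite ss_ri1.
exists (fun k => Zf (a k) / w r) => r'.
have -> : \sum_k Zf (a k) / w r * Cc k r' = w r' / w r.
  by rewrite /w mulr_suml; apply: eq_bigr => k _; rewrite mulrAC.
have [<-|d] := eqVneq r r'; first by rewrite divff // eqxx.
rewrite /w (binom_w ha (hSb _ (hl x hx)) d hw) mul0r.
by [].
Qed.

Lemma cmonoX y : exists mm : 'X_{1..N}, cmono m y = 'X_[mm].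
Proof.
rewrite /cmono; elim/big_ind: _.
- by exists 0%MM; rewrite mpolyX0.
- by move=> x1 x2 [m1 ->] [m2 ->]; exists (m1 + m2)%MM; rewrite mpolyXD.
- by move=> k _; rewrite /xvar mpolyXn; eexists.
Qed.

Lemma binom_is_binomial r : is_binomial (binom_r reac prod r).
Proof.
have [m1 e1] := cmonoX (reac r); have [m2 e2] := cmonoX (prod r).
rewrite /is_binomial /binom_r e1 e2 /kfw /krv -!mpolyXD.
set a := (_ + m1)%MM; set b := (_ + m2)%MM.
have hsub : {subset msupp (- 'X_[a] + 'X_[b] : R) <= [:: a; b]}.
  move=> x /msuppD_le; rewrite mem_cat (perm_mem (msuppN _)) !msuppX !inE.
  by move=> /orP [] ->; rewrite ?orbT.
exact: (uniq_leq_size (msupp_uniq _) hsub).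
Qed.

Definition Bset (q : R) := exists r, q = binom_r reac prod r.

Lemma Cond_UB : (forall r, exists a : 'I_n -> rat, forall r', \sum_k a k * Cc k r' = (r == r')%:R) ->
  unconditionally_binomial reac prod.
Proof.
move=> hC; exists Bset; split.
  by move=> q [r ->]; apply: binom_is_binomial.
have castC k r : ((coef reac prod k r)%:~R : R) = (Cc k r)%:MP.
  by rewrite /Cc rmorph_int.
move=> p; split; apply: in_ideal_trans => q.
- move=> [r ->]; have [a ha] := hC r.
  have -> : binom_r reac prod r = \sum_k (a k)%:MP * ss_poly reac prod k.
    rewrite /ss_poly.
    under eq_bigr do rewrite mulr_sumr.
    rewrite exchange_big /=.
    under eq_bigr => r' _.
      under eq_bigr do rewrite castC mulrA -rmorphM.
      rewrite -mulr_suml -rmorph_sum ha.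
    over.
    rewrite (bigD1 r) //= eqxx rmorph1 mul1r big1 ?addr0 // => r' hr'.
    by rewrite eq_sym (negbTE hr') rmorph0 mul0r.
  by apply: in_ideal_sum => k; apply: in_idealM; apply: in_ideal_mem; exists k.
- move=> [k ->]; rewrite /ss_poly; apply: in_ideal_sum => r.
  by apply: in_idealM; apply: in_ideal_mem; exists r.
Qed.

End Net.

Theorem mainTheorem1 (n m : nat) (reac prod : 'I_m -> 'I_n -> nat)
  (Hwf : rcrn_wf reac prod) (ord : seq 'I_m)
  (Hord : perm_eq ord (enum 'I_m)) :
  (exists st', alg_run ord (init_state reac prod) st') /\
  (forall st', alg_run ord (init_state reac prod) st' ->
     (returns_UB st'.1 <-> unconditionally_binomial reac prod)).
Proof.
split; first exact: run_exists.
move=> st' hrun.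
have L0E s r : (init_state reac prod).1 s r = Cc reac prod s r by rewrite /= mxE.
have CondE : Cond (init_state reac prod).1 <->
    (forall r, exists a : 'I_n -> rat, forall r', \sum_k a k * Cc reac prod k r' = (r == r')%:R).
  split => h r; have [a ha] := h r; exists a => r'; rewrite -(ha r');
    by apply: eq_bigr => k _; rewrite L0E.
have [sp1 sp2] := run_Span hrun.
split.
- move=> hU; apply: Cond_UB; apply/CondE.
  exact: (Cond_Span sp2 (Cond_of_UB hU)).
- move=> hub; have hC0 : Cond (init_state reac prod).1 by apply/CondE; apply: UB_Cond.
  have hI0 : Inv [::] (init_state reac prod).
    by split => // s; rewrite inE.
  have hu : uniq ([::] ++ ord) by rewrite /= (perm_uniq Hord) enum_uniq.
  have [hC hcol _] := run_Inv hu hI0 hrun.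
  apply: UB_of => // r.
  have hr : r \in [::] ++ ord by rewrite /= (perm_mem Hord) mem_enum.
  by have [s _ hs] := hcol r hr; exists s.
Qed.
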